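(* Let $\mathcal{A}\in\mathbb{R}^{n\times n\times n}$ and $\mathcal{E}\in\mathbb{R}^{n\times n\times n}$ be such that $\mathcal{A}$ and $\tilde{\mathcal{A}}=\mathcal{A}+\mathcal{E}$ are piezoelectric-type tensors. Then $$\lambda_{C\max}(\mathcal{A})-\lambda_{C\max}(\mathcal{E})\le \lambda_{C\max}(\tilde{\mathcal{A}})\le \lambda_{C\max}(\mathcal{A})+\lambda_{C\max}(\mathcal{E}).$$
   Context: A tensor $\mathcal{A}=(a_{ijk})\in\mathbb{R}^{n\times n\times n}$ is piezoelectric-type if $a_{ijk}=a_{ikj}$ for all $i,j,k$ (so $\mathcal{E}=\tilde{\mathcal{A}}-\mathcal{A}$ is piezoelectric-type as well). For such $\mathcal{A}$ and $\mathbf{x},\mathbf{y}\in\mathbb{R}^n$, define $(\mathcal{A}\mathbf{y}\mathbf{y})_i=\sum_{j,k}a_{ijk}y_jy_k$, $(\mathbf{x}\mathcal{A}\mathbf{y})_i=\sum_{j,k}a_{jki}x_jy_k$, and $\mathbf{x}\mathcal{A}\mathbf{y}\mathbf{y}=\sum_{i,j,k}a_{ijk}x_iy_jy_k$. A $C$-eigenvalue of $\mathcal{A}$ is a real $\lambda$ for which there exist $\mathbf{x},\mathbf{y}\in\mathbb{R}^n$ with $\mathcal{A}\mathbf{y}\mathbf{y}=\lambda\mathbf{x}$, $\mathbf{x}\mathcal{A}\mathbf{y}=\lambda\mathbf{y}$, $\mathbf{x}^T\mathbf{x}=\mathbf{y}^T\mathbf{y}=1$. The largest $C$-eigenvalue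 is $\lambda_{C\max}(\mathcal{A})=\max\{\mathbf{x}\mathcal{A}\mathbf{y}\mathbf{y}:\mathbf{x}^T\mathbf{x}=1,\ \mathbf{y}^T\mathbf{y}=1\}$. *)

(* Defs.v *)
From mathcomp Require Import all_boot all_order all_algebra.
From mathcomp Require Import all_classical all_reals.
Set Implicit Arguments. Unset Strict Implicit. Unset Printing Implicit Defensive.
Import Order.TTheory GRing.Theory Num.Theory.
Local Open Scope ring_scope.
Local Open Scope classical_set_scope.

Definition tensor3 (R : realType) (n : nat) := 'I_n -> 'I_n -> 'I_n -> R.

Definition piezo_type (R : realType) (n : nat) (A : tensor3 R n) : Prop :=
  forall i j k, A i j k = A i k j.

Definition tadd (R : realType) (n : nat) (A E : tensor3 R n) : tensor3 R n :=
  fun i j k => A i j k + E i j k.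

Definition xAyy (R : realType) (n : nat) (A : tensor3 R n) (x y : 'I_n -> R) : R :=
  \sum_(i < n) \sum_(j < n) \sum_(k < n) A i j k * x i * y j * y k.

Definition unit_vec (R : realType) (n : nat) (x : 'I_n -> R) : Prop :=
  \sum_(i < n) x i ^+ 2 = 1.

(* lambda_Cmax(A) = max { x A y y : x^T x = 1, y^T y = 1 } (the max exists by
   compactness; we take the supremum of the value set). *)
Definition lambdaCmax (R : realType) (n : nat) (A : tensor3 R n) : R :=
  sup [set v | exists x y : 'I_n -> R,
          [/\ unit_vec x, unit_vec y & v = xAyy A x y]].

(* Main.v *)
Require Import Defs.
From mathcomp Require Import all_boot all_order all_algebra.
From mathcomp Require Import all_classical all_reals.
Import Order.TTheory GRing.Theory Num.Theory.
Local Open Scope ring_scope.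
Local Open Scope classical_set_scope.

Section Aux.
Variables (R : realType) (n : nat).

Definition Sset (A : tensor3 R n) := [set v | exists x y : 'I_n -> R,
          [/\ unit_vec x, unit_vec y & v = xAyy A x y]].

Lemma xAyy_add (A E : tensor3 R n) x y :
  xAyy (tadd A E) x y = xAyy A x y + xAyy E x y.
Proof.
rewrite /xAyy -big_split; apply eq_bigr => i _.
rewrite -big_split; apply eq_bigr => j _.
rewrite -big_split; apply eq_bigr => k _.
by rewrite /tadd !mulrDl.
Qed.

Lemma xAyy_opp (A : tensor3 R n) x y :
  xAyy A (fun i => - x i) y = - xAyy A x y.
Proof.
rewrite /xAyy -sumrN; apply eq_bigr => i _.
rewrite -sumrN; apply eq_bigr => j _.
rewrite -sumrN; apply eq_bigr => k _.
by rewrite mulrN !mulNr.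
Qed.

Lemma unit_opp (x : 'I_n -> R) : unit_vec x -> unit_vec (fun i => - x i).
Proof. by rewrite /unit_vec => <-; apply: eq_bigr => i _; rewrite sqrrN. Qed.

Lemma unit_le1 (x : 'I_n -> R) i : unit_vec x -> `|x i| <= 1.
Proof.
move=> hx.
have h : x i ^+ 2 <= 1.
  rewrite -hx (bigD1 i) //= lerDl sumr_ge0 // => j _.
  exact: sqr_ge0.
by rewrite -(expr_le1 (n:=2)) // real_normK ?num_real.
Qed.

Lemma Sset_ub (A : tensor3 R n) x y : unit_vec x -> unit_vec y ->
  xAyy A x y <= \sum_(i < n) \sum_(j < n) \sum_(k < n) `|A i j k|.
Proof.
move=> hx hy; rewrite /xAyy.
apply: ler_sum => i _; apply: ler_sum => j _; apply: ler_sum => k _.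
apply: le_trans (ler_norm _) _.
rewrite !normrM.
have h1 := unit_le1 _ i hx; have h2 := unit_le1 _ j hy; have h3 := unit_le1 _ k hy.
rewrite -[leRHS]mulr1 -mulrA -mulrA ler_wpM2l //.
rewrite -[1]mulr1 ler_pM // ?mulr_ge0 //.
by rewrite -[1]mulr1 ler_pM.
Qed.

Lemma Sset_hasub (A : tensor3 R n) : has_ubound (Sset A).
Proof.
exists (\sum_(i < n) \sum_(j < n) \sum_(k < n) `|A i j k|).
by move=> v [x [y [hx hy ->]]]; apply: Sset_ub.
Qed.

Lemma Sset_le (A : tensor3 R n) x y : unit_vec x -> unit_vec y ->
  xAyy A x y <= lambdaCmax A.
Proof.
move=> hx hy; apply: (ub_le_sup (Sset_hasub A)).
by exists x, y.
Qed.

End Aux.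

Theorem theorem2p1 (R : realType) (n : nat) (A E : tensor3 R n) :
  piezo_type A -> piezo_type (tadd A E) ->
  lambdaCmax A - lambdaCmax E <= lambdaCmax (tadd A E) /\
  lambdaCmax (tadd A E) <= lambdaCmax A + lambdaCmax E.
Proof.
move=> _ _.
have [P|nP] := pselect (exists x y : 'I_n -> R, unit_vec x /\ unit_vec y).
- case: P => x0 [y0 [hx0 hy0]].
  split.
  + rewrite lerBlDr.
    apply: ge_sup.
      by exists (xAyy A x0 y0), x0, y0.
    move=> v [x [y [hx hy ->]]].
    have -> : xAyy A x y = xAyy (tadd A E) x y + xAyy E (fun i => - x i) y.
      by rewrite xAyy_add xAyy_opp addrK.
    apply: lerD; first exact: Sset_le.
    by apply: Sset_le => //; apply: unit_opp.
  + apply: ge_sup.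
      by exists (xAyy (tadd A E) x0 y0), x0, y0.
    move=> v [x [y [hx hy ->]]].
    by rewrite xAyy_add; apply: lerD; apply: Sset_le.
- have e : forall B : tensor3 R n, lambdaCmax B = 0.
    move=> B; rewrite /lambdaCmax.
    have -> : [set v | exists x y : 'I_n -> R,
          [/\ unit_vec x, unit_vec y & v = xAyy B x y]] = set0.
      apply/seteqP; split => // v [x [y [hx hy _]]].
      by apply: nP; exists x, y.
    exact: sup0.
  by rewrite !e subr0 addr0.
Qed.
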